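(* Let the language contain a constant and let $t_1,t_2,\dots$ be a fixed enumeration of all closed terms. Let $E$ be a sentence containing only weak quantifier occurrences. In every term structure there is an $n$ such that $\|E_m\|=\|E\|$ for all $m\ge n$.
   Context: The propositional setting is as follows. - A lattice-oriented signature $\mathcal{L}$ is a finite set of connectives. Each connective $c$ has an arity $n_c$ and a polarity $p_c:\{1,\dots,n_c\}\to\{-,+\}$. It includes binary $\lor,\land,\to$ with $p_\lor\equiv p_\land\equiv +$, $p_\to(1)=-$ and $p_\to(2)=+$. - A finite $\mathcal{L}$-lattice $\mathbf{A}$ is a finite set $L$ with operations $c^L$ such that $(L,\lor^L,\land^L)$ is a lattice with order $\le$ and top $1$. Each $c^L$ is monotone in the arguments with polarity $+$ and antitone in those with polarity $-$. Moreover $1\le a\to b$ iff $a\le b$. The first-order setting is as follows. - Fix a finite $\mathcal{L}$-lattice $\mathbf{A}$ and a predicate language with predicate and function symbols of given arities. - Terms and formulas are built as usual from object variables using the connectives of $\mathcal{L}$ and the quantifiers $\forall,\exists$. - A structure consists of a nonempty set $S$, maps $P^S:S^n\to L$ for the $n$-ary predicate symbols, and maps $f^S:S^n\to S$ for the $n$-ary function symbols. - An evaluation $v$ maps variables to $S$. Formulas get values in $L$: connectives are interpreted by $c^L$; $\|\forall x\varphi\|_v=\bigwedge_{a\in S}\|\varphi\|_{v[x\to a]}$ and $\|\exists x\varphi\|_v=\bigvee_{a\in S}\|\varphi\|_{v[x\to a]}$. - A term structure is a structure whose domain $S$ is the set of all closed terms, with each function symbol interpreted as the corresponding term constructor. -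 An occurrence in a formula is positive or negative: the whole formula is positive, and going into argument $i$ of a connective $c$ keeps the polarity if $p_c(i)=+$ and flips it if $p_c(i)=-$. Quantifiers do not change polarity. - Weak quantifier occurrences are positive occurrences of $\exists$ and negative occurrences of $\forall$; strong ones are positive $\forall$ and negative $\exists$. - The $n$-th expansion $E_n$ of $E$ is obtained by replacing, from the inside out, every subformula $\exists xA(x)$ by $\bigvee_{i=1}^nA(t_i)$ and every subformula $\forall xA(x)$ by $\bigwedge_{i=1}^nA(t_i)$. *)

(* Defs.v *)
From HB Require Import structures.
From mathcomp Require Import all_boot all_order.
From Stdlib Require Import ClassicalEpsilon.
Set Implicit Arguments. Unset Strict Implicit. Unset Printing Implicit Defensive.
Import Order.Theory.
Local Open Scope order_scope.

Section Syntax.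
Variables (Fsym : Type) (farity : Fsym -> nat) (Psym : Type) (parity : Psym -> nat).
(* Lattice-oriented signature: the three mandatory binary connectives plus a
   finite set C of further connectives with arity and polarity (true = +). *)
Variables (C : finType) (oarity : C -> nat) (opol : forall c, 'I_(oarity c) -> bool).

Inductive conn := COr | CAnd | CImp | COther (c : C).

Definition arity (k : conn) : nat :=
  match k with COr | CAnd | CImp => 2 | COther c => oarity c end.

Definition pol (k : conn) : 'I_(arity k) -> bool :=
  match k as k0 return 'I_(arity k0) -> bool with
  | COr => fun _ => true
  | CAnd => fun _ => true
  | CImp => fun i => val i != 0%N   (* p(1) = -, p(2) = + *)
  | COther c => @opol c
  end.

Inductive term := Var (x : nat) | App (f : Fsym) (a : 'I_(farity f) -> term).

(* closed terms: the domain of term structures *)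
Inductive cterm := CApp (f : Fsym) (a : 'I_(farity f) -> cterm).

Inductive form :=
  | Pred (p : Psym) (a : 'I_(parity p) -> term)
  | Conn (k : conn) (a : 'I_(arity k) -> form)
  | All (x : nat) (A : form)
  | Ex (x : nat) (A : form).

Fixpoint free_t (x : nat) (t : term) : Prop :=
  match t with Var y => y = x | App f a => exists i, free_t x (a i) end.

Fixpoint free_f (x : nat) (A : form) : Prop :=
  match A with
  | Pred p a => exists i, free_t x (a i)
  | Conn k a => exists i, free_f x (a i)
  | All y B => y <> x /\ free_f x B
  | Ex y B => y <> x /\ free_f x B
  end.

Definition sentence (A : form) : Prop := forall x, ~ free_f x A.

(* weak_only pos A : every quantifier occurrence in A is weak, where the
   polarity of A itself is pos (true = positive). *)
Fixpoint weak_only (pos : bool) (A : form) : Prop :=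
  match A with
  | Pred _ _ => True
  | Conn k a => forall i, weak_only (if pol i then pos else ~~ pos) (a i)
  | All _ B => pos = false /\ weak_only pos B
  | Ex _ B => pos = true /\ weak_only pos B
  end.

Fixpoint emb (s : cterm) : term :=
  match s with CApp f a => @App f (fun i => emb (a i)) end.

Fixpoint subst_t (x : nat) (s : cterm) (t : term) : term :=
  match t with
  | Var y => if y == x then emb s else Var y
  | App f a => @App f (fun i => subst_t x s (a i))
  end.

Fixpoint subst (x : nat) (s : cterm) (A : form) : form :=
  match A with
  | Pred p a => @Pred p (fun i => subst_t x s (a i))
  | Conn k a => @Conn k (fun i => subst x s (a i))
  | All y B => if y == x then All y B else All y (subst x s B)
  | Ex y B => if y == x then Ex y B else Ex y (subst x s B)
  end.

Definition Or2 (A B : form) : form :=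
  Conn (k := COr) (fun i : 'I_2 => if val i == 0%N then A else B).
Definition And2 (A B : form) : form :=
  Conn (k := CAnd) (fun i : 'I_2 => if val i == 0%N then A else B).

Fixpoint bigOr (A : form) (s : seq form) : form :=
  match s with [::] => A | B :: s' => Or2 A (bigOr B s') end.
Fixpoint bigAnd (A : form) (s : seq form) : form :=
  match s with [::] => A | B :: s' => And2 A (bigAnd B s') end.

(* n-th expansion w.r.t. the enumeration t_1, t_2, ... given by
   t_i := t (i - 1), i.e. t_1, ..., t_n are t 0, ..., t (n-1).
   (Only meaningful for n >= 1.) *)
Fixpoint expand (t : nat -> cterm) (n : nat) (A : form) : form :=
  match A with
  | Pred p a => @Pred p a
  | Conn k a => @Conn k (fun i => expand t n (a i))
  | All x B => let B' := expand t n B in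
      bigAnd (subst x (t 0%N) B') [seq subst x (t i) B' | i <- iota 1 n.-1]
  | Ex x B => let B' := expand t n B in
      bigOr (subst x (t 0%N) B') [seq subst x (t i) B' | i <- iota 1 n.-1]
  end.

End Syntax.

Definition pb (P : Prop) : bool :=
  if excluded_middle_informative P then true else false.

Section Semantics.
Variables (Fsym : Type) (farity : Fsym -> nat) (Psym : Type) (parity : Psym -> nat).
Variables (C : finType) (oarity : C -> nat) (opol : forall c, 'I_(oarity c) -> bool).
(* finite L-lattice: a finite lattice with top, an implication, and
   interpretations of the other connectives *)
Variables (d : Order.disp_t) (L : finTBLatticeType d) (imp : L -> L -> L)
  (ointerp : forall c, ('I_(oarity c) -> L) -> L).

Definition L_lattice_axioms : Prop :=
  (forall a a' b, a' <= a -> imp a b <= imp a' b) /\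
  (forall a b b', b <= b' -> imp a b <= imp a b') /\
  (forall a b, (\top <= imp a b) = (a <= b)) /\
  (forall c (i : 'I_(oarity c)) (a b : 'I_(oarity c) -> L),
      (forall j, j != i -> a j = b j) ->
      (if @opol c i then a i <= b i else b i <= a i) ->
      ointerp a <= ointerp b).

Definition cinterp (k : conn C) : ('I_(arity oarity k) -> L) -> L :=
  match k as k0 return ('I_(arity oarity k0) -> L) -> L with
  | COr => fun a => a ord0 `|` a ord_max
  | CAnd => fun a => a ord0 `&` a ord_max
  | CImp => fun a => imp (a ord0) (a ord_max)
  | COther c => @ointerp c
  end.

(* infimum / supremum in the finite lattice of a family indexed by closed
   terms: the meet / join of the (finite) set of its values *)
Definition infS (f : cterm farity -> L) : L :=
  \meet_(a : L | pb (exists s, f s = a)) a.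
Definition supS (f : cterm farity -> L) : L :=
  \join_(a : L | pb (exists s, f s = a)) a.

Fixpoint teval (v : nat -> cterm farity) (t : term farity) : cterm farity :=
  match t with
  | Var x => v x
  | App f a => @CApp _ _ f (fun i => teval v (a i))
  end.

Definition upd (v : nat -> cterm farity) (x : nat) (s : cterm farity) :=
  fun y => if y == x then s else v y.

(* value of a formula in the term structure with predicate interpretation P *)
Variable (P : forall p, ('I_(parity p) -> cterm farity) -> L).

Fixpoint eval (A : form farity parity oarity) (v : nat -> cterm farity) : L :=
  match A with
  | Pred p a => P (fun i => teval v (a i))
  | Conn k a => cinterp (fun i => eval (a i) v)
  | All x B => infS (fun s => eval B (upd v x s))
  | Ex x B => supS (fun s => eval B (upd v x s))
  end.

End Semantics.

(* Main.v *)
Require Import Defs.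
From HB Require Import structures.
From mathcomp Require Import all_boot all_order.
From Stdlib Require Import FunctionalExtensionality ClassicalEpsilon Classical.
Set Implicit Arguments. Unset Strict Implicit. Unset Printing Implicit Defensive.
Import Order.Theory.
Local Open Scope order_scope.

Section Proofs.
Variables (Fsym : Type) (farity : Fsym -> nat) (Psym : Type) (parity : Psym -> nat)
  (C : finType) (oarity : C -> nat) (opol : forall c, 'I_(oarity c) -> bool)
  (d : Order.disp_t) (L : finTBLatticeType d) (imp : L -> L -> L)
  (ointerp : forall c, ('I_(oarity c) -> L) -> L)
  (P : forall p, ('I_(parity p) -> cterm farity) -> L).

Notation ev := (eval imp ointerp P).
Notation fm := (form farity parity oarity).

Lemma teval_emb (v : nat -> cterm farity) (s : cterm farity) : teval v (emb s) = s.
Proof.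
elim: s => f a IH /=; congr CApp; apply: functional_extensionality => i; exact: IH.
Qed.

Lemma teval_subst x (s : cterm farity) (tm : term farity) (v : nat -> cterm farity) : teval v (subst_t x s tm) = teval (upd v x s) tm.
Proof.
elim: tm => [y|f a IH] /=.
  by rewrite /upd; case: (y == x) => //; rewrite teval_emb.
congr CApp; apply: functional_extensionality => i; exact: IH.
Qed.

Lemma upd_same (v : nat -> cterm farity) x s s' : upd (upd v x s) x s' = upd v x s'.
Proof. by apply: functional_extensionality => y; rewrite /upd; case: (y == x). Qed.

Lemma upd_comm (v : nat -> cterm farity) x y s s' : y != x ->
  upd (upd v x s) y s' = upd (upd v y s') x s.
Proof.
move=> hyx; apply: functional_extensionality => z; rewrite /upd.
case: (eqVneq z y) => [->|]; last by [].
by rewrite (negbTE hyx).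
Qed.

Lemma eval_subst (A : fm) x (s : cterm farity) v : ev (subst x s A) v = ev A (upd v x s).
Proof.
elim: A v => [p a|k a IH|y B IH|y B IH] v /=.
- f_equal; apply: functional_extensionality => i; exact: teval_subst.
- f_equal; apply: functional_extensionality => i; exact: IH.
- case: eqP => [->|/eqP hyx] /=.
    by f_equal; apply: functional_extensionality => s'; rewrite upd_same.
  f_equal; apply: functional_extensionality => s'; by rewrite IH (upd_comm _ _ _ hyx).
- case: eqP => [->|/eqP hyx] /=.
    by f_equal; apply: functional_extensionality => s'; rewrite upd_same.
  f_equal; apply: functional_extensionality => s'; by rewrite IH (upd_comm _ _ _ hyx).
Qed.

Lemma teval_ext (tm : term farity) (v w : nat -> cterm farity) : (forall x, free_t x tm -> v x = w x) ->
  teval v tm = teval w tm.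
Proof.
elim: tm => [y|f a IH] /= h; first exact: h.
congr CApp; apply: functional_extensionality => i; apply: IH => x hx.
by apply: h; exists i.
Qed.

Lemma eval_ext (A : fm) v w : (forall x, free_f x A -> v x = w x) -> ev A v = ev A w.
Proof.
elim: A v w => [p a|k a IH|y B IH|y B IH] v w /= h.
- f_equal; apply: functional_extensionality => i; apply: teval_ext => x hx.
  by apply: h; exists i.
- f_equal; apply: functional_extensionality => i; apply: IH => x hx.
  by apply: h; exists i.
- f_equal; apply: functional_extensionality => s; apply: IH => x hx; rewrite /upd.
  case: eqP => // hxy; apply: h; split => //; by move=> e; apply: hxy.
- f_equal; apply: functional_extensionality => s; apply: IH => x hx; rewrite /upd.
  case: eqP => // hxy; apply: h; split => //; by move=> e; apply: hxy.
Qed.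

Lemma free_emb x (s : cterm farity) : ~ free_t x (emb s).
Proof. elim: s => f a IH /= [i]; exact: IH. Qed.

Lemma free_subst_t y x (s : cterm farity) (tm : term farity) : free_t y (subst_t x s tm) -> y <> x /\ free_t y tm.
Proof.
elim: tm => [z|f a IH] /=.
  by case: eqP => [-> /free_emb //|hzx] /= <-; split.
move=> [i /IH [h1 h2]]; split => //; by exists i.
Qed.

Lemma free_subst y x (s : cterm farity) (A : fm) : free_f y (subst x s A) -> y <> x /\ free_f y A.
Proof.
elim: A => [p a|k a IH|z B IH|z B IH] /=.
- move=> [i /free_subst_t [h1 h2]]; split => //; by exists i.
- move=> [i /IH [h1 h2]]; split => //; by exists i.
- case: eqP => [->|hzx] /=.
    by move=> [h1 h2]; split => // e; apply: h1; rewrite e.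
  by move=> [h1 /IH [h2 h3]].
- case: eqP => [->|hzx] /=.
    by move=> [h1 h2]; split => // e; apply: h1; rewrite e.
  by move=> [h1 /IH [h2 h3]].
Qed.

Lemma free_bigOr y (F : nat -> fm) r (A : fm) :
  free_f y (bigOr A [seq F i | i <- r]) -> free_f y A \/ exists i, free_f y (F i).
Proof.
elim: r A => [|j r IH] A /=; first by left.
move=> [i]; case: (val i == 0%N) => h; first by left.
case: (IH _ h) => [h'|[k hk]]; right; [by exists j| by exists k].
Qed.

Lemma free_bigAnd y (F : nat -> fm) r (A : fm) :
  free_f y (bigAnd A [seq F i | i <- r]) -> free_f y A \/ exists i, free_f y (F i).
Proof.
elim: r A => [|j r IH] A /=; first by left.
move=> [i]; case: (val i == 0%N) => h; first by left.
case: (IH _ h) => [h'|[k hk]]; right; [by exists j| by exists k].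
Qed.

Lemma free_expand (t : nat -> cterm farity) m y (A : fm) :
  free_f y (expand t m A) -> free_f y A.
Proof.
elim: A => [p a|k a IH|z B IH|z B IH] //=.
- move=> [i /IH h]; by exists i.
- move/free_bigAnd => [/free_subst [h1 h2]|[i /free_subst [h1 h2]]];
    split => [e|]; try (by apply: h1; rewrite e); exact: IH.
- move/free_bigOr => [/free_subst [h1 h2]|[i /free_subst [h1 h2]]];
    split => [e|]; try (by apply: h1; rewrite e); exact: IH.
Qed.


Lemma pbT (Q : Prop) : Q -> pb Q = true.
Proof. by rewrite /pb; case: excluded_middle_informative. Qed.

Lemma supS_ub (f : cterm farity -> L) s : f s <= supS f.
Proof. by rewrite /supS; apply: (joins_sup (fun a => a)); rewrite pbT //; exists s. Qed.

Lemma supS_least (f : cterm farity -> L) x : (forall s, f s <= x) -> supS f <= x.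
Proof.
move=> h; apply/joinsP => a; rewrite /pb; case: excluded_middle_informative => // -[s e] _.
by rewrite -e.
Qed.

Lemma infS_lb (f : cterm farity -> L) s : infS f <= f s.
Proof. by rewrite /infS; apply: (meets_inf (fun a => a)); rewrite pbT //; exists s. Qed.

Lemma infS_greatest (f : cterm farity -> L) x : (forall s, x <= f s) -> x <= infS f.
Proof.
move=> h; apply/meetsP => a; rewrite /pb; case: excluded_middle_informative => // -[s e] _.
by rewrite -e.
Qed.

Lemma eval_bigOr (F : nat -> fm) k j v :
  ev (bigOr (F j) [seq F i | i <- iota j.+1 k]) v = \join_(j <= i < j + k.+1) ev (F i) v.
Proof.
elim: k j => [|k IH] j /=; first by rewrite addn1 big_nat1.
rewrite IH (@big_ltn _ _ _ j (j + k.+2)) ?addnS ?addSn //.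
by rewrite ltnS ltnW // ltnS leq_addr.
Qed.

Lemma eval_bigAnd (F : nat -> fm) k j v :
  ev (bigAnd (F j) [seq F i | i <- iota j.+1 k]) v = \meet_(j <= i < j + k.+1) ev (F i) v.
Proof.
elim: k j => [|k IH] j /=; first by rewrite addn1 big_nat1.
rewrite IH (@big_ltn _ _ _ j (j + k.+2)) ?addnS ?addSn //.
by rewrite ltnS ltnW // ltnS leq_addr.
Qed.


Lemma ointerp_mono (HL : L_lattice_axioms opol imp ointerp) c (a b : 'I_(oarity c) -> L) :
  (forall i, if opol i then a i <= b i else b i <= a i) -> ointerp a <= ointerp b.
Proof.
case: HL => _ [_ [_ HL4]] h.
pose mix k := fun j : 'I_(oarity c) => if (j < k)%N then b j else a j.
have step : forall k, ointerp (mix k) <= ointerp (mix k.+1).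
  move=> k; case: (ltnP k (oarity c)) => hk.
    apply: (HL4 c (Ordinal hk)) => [j hj|].
      have hjk : (nat_of_ord j != k).
        apply: contra hj => /eqP e; apply/eqP; exact: val_inj.
      rewrite /mix; have -> : (j < k.+1)%N = (j < k)%N by rewrite ltnS leq_eqVlt (negbTE hjk).
      by [] .
    by rewrite /mix /= ltnn ltnSn; exact: h.
  have -> : mix k = mix k.+1; last by [].
  apply: functional_extensionality => j; rewrite /mix.
  have hj : (j < k)%N by apply: leq_trans (ltn_ord j) hk.
  by rewrite hj (ltn_trans hj (ltnSn k)).
have gen : forall k, ointerp a <= ointerp (mix k).
  elim => [|k IHk].
    have -> : mix 0%N = a by apply: functional_extensionality => j.
    by [].
  exact: le_trans IHk (step k).
have -> : b = mix (oarity c); last exact: gen.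
by apply: functional_extensionality => j; rewrite /mix ltn_ord.
Qed.

Lemma cinterp_mono (HL : L_lattice_axioms opol imp ointerp) (k : conn C)
  (a b : 'I_(arity oarity k) -> L) :
  (forall i, if pol opol i then a i <= b i else b i <= a i) ->
  cinterp imp ointerp a <= cinterp imp ointerp b.
Proof.
case: k a b => [||| c] a b h /=.
- exact: leU2 (h ord0) (h ord_max).
- exact: leI2 (h ord0) (h ord_max).
- have h0 := h ord0; have h1 := h ord_max; simpl in h0, h1.
  case: HL => HL1 [HL2 _].
  exact: le_trans (HL1 _ _ _ h0) (HL2 _ _ _ h1).
- exact: ointerp_mono.
Qed.

Lemma fin_bound (T : finType) (Q : T -> nat -> Prop) :
  (forall a n m, (n <= m)%N -> Q a n -> Q a m) -> (forall a, exists n, Q a n) ->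
  exists N, forall a, Q a N.
Proof.
move=> hm hex.
suff : forall s : seq T, exists N, forall a, a \in s -> Q a N.
  by move=> /(_ (enum T)) [N hN]; exists N => a; apply: hN; rewrite mem_enum.
elim => [|a s [N hN]]; first by exists 0%N.
have [n hn] := hex a.
exists (maxn n N) => b; rewrite in_cons => /orP [/eqP ->|hb].
  exact: hm (leq_maxl _ _) hn.
exact: hm (leq_maxr _ _) (hN _ hb).
Qed.

Lemma mono (HL : L_lattice_axioms opol imp ointerp) (t : nat -> cterm farity)
  (A : fm) pos : weak_only opol pos A -> forall m w,
  if pos then ev (expand t m A) w <= ev A w else ev A w <= ev (expand t m A) w.
Proof.
elim: A pos => [p a|k a IH|x B IH|x B IH] pos /= hw m w.
- by case: pos.
- case: pos hw => hw; apply: cinterp_mono => // i;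
    have := IH i _ (hw i) m w; by case: (pol opol i).
- case: hw => -> hB.
  rewrite (eval_bigAnd (fun i => subst x (t i) (expand t m B))).
  apply/meetsP_seq => i _ _; rewrite eval_subst.
  exact: le_trans (infS_lb _ (t i)) (IH false hB m _).
- case: hw => -> hB.
  rewrite (eval_bigOr (fun i => subst x (t i) (expand t m B))).
  apply/joinsP_seq => i _ _; rewrite eval_subst.
  exact: le_trans (IH true hB m _) (supS_ub _ (t i)).
Qed.


Lemma main_lemma (HL : L_lattice_axioms opol imp ointerp) (t : nat -> cterm farity)
  (ht : forall s : cterm farity, exists i, t i = s)
  (A : fm) pos : weak_only opol pos A -> forall v, exists n, (0 < n)%N /\
  forall m, (n <= m)%N -> ev (expand t m A) v = ev A v.
Proof.
elim: A pos => [p a|k a IH|x B IH|x B IH] pos /= hw v.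
- by exists 1%N.
- have [N hN] := @fin_bound _ (fun i n => forall m, (n <= m)%N ->
      ev (expand t m (a i)) v = ev (a i) v)
    (fun i n m hnm h m' hm' => h m' (leq_trans hnm hm'))
    (fun i => let: ex_intro n (conj _ hn) := IH i _ (hw i) v in ex_intro _ n hn).
  exists N.+1; split => // m hm; f_equal; apply: functional_extensionality => i.
  by apply: hN; apply: ltnW.
- case: hw => hpos hB; subst pos.
  pose Q := fun a n => (exists s, ev B (upd v x s) = a) ->
      exists i, (i < n)%N /\ forall m, (n <= m)%N -> ev (expand t m B) (upd v x (t i)) = a.
  have hQm : forall a n m, (n <= m)%N -> Q a n -> Q a m.
    move=> a n m' hnm h hex; have [i [hi hm']] := h hex.
    exists i; split; first exact: leq_trans hi hnm.
    by move=> m'' hm''; apply: hm'; exact: leq_trans hnm hm''.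
  have hQe : forall a, exists n, Q a n.
    move=> a; case: (classic (exists s, ev B (upd v x s) = a)) => [[s hs]|hno]; last first.
      by exists 0%N => /hno.
    have [i hi] := ht s.
    have [n0 [_ hn0]] := IH false hB (upd v x s).
    exists (maxn i.+1 n0) => _; exists i; split; first by rewrite leq_max ltnSn.
    move=> m hm; rewrite hi -hs; apply: hn0; exact: leq_trans (leq_maxr _ _) hm.
  have [N hN] := fin_bound hQm hQe.
  exists N.+1; split => // m hm.
  rewrite (eval_bigAnd (fun i => subst x (t i) (expand t m B))) add0n prednK;
    last exact: leq_trans (ltn0Sn _) hm.
  apply/le_anti/andP; split.
    apply/meetsP => a; rewrite /pb; case: excluded_middle_informative => // hex _.
    have [i [hiN hi]] := hN a hex.
    rewrite -(hi m (ltnW hm)) -eval_subst.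
    apply: (meets_inf_seq (fun i => ev (subst x (t i) (expand t m B)) v)) => //.
    by rewrite mem_index_iota (ltn_trans hiN hm).
  apply/meetsP_seq => i _ _; rewrite eval_subst.
  exact: le_trans (infS_lb _ (t i)) (mono HL t hB m _).
- case: hw => hpos hB; subst pos.
  pose Q := fun a n => (exists s, ev B (upd v x s) = a) ->
      exists i, (i < n)%N /\ forall m, (n <= m)%N -> ev (expand t m B) (upd v x (t i)) = a.
  have hQm : forall a n m, (n <= m)%N -> Q a n -> Q a m.
    move=> a n m' hnm h hex; have [i [hi hm']] := h hex.
    exists i; split; first exact: leq_trans hi hnm.
    by move=> m'' hm''; apply: hm'; exact: leq_trans hnm hm''.
  have hQe : forall a, exists n, Q a n.
    move=> a; case: (classic (exists s, ev B (upd v x s) = a)) => [[s hs]|hno]; last first.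
      by exists 0%N => /hno.
    have [i hi] := ht s.
    have [n0 [_ hn0]] := IH true hB (upd v x s).
    exists (maxn i.+1 n0) => _; exists i; split; first by rewrite leq_max ltnSn.
    move=> m hm; rewrite hi -hs; apply: hn0; exact: leq_trans (leq_maxr _ _) hm.
  have [N hN] := fin_bound hQm hQe.
  exists N.+1; split => // m hm.
  rewrite (eval_bigOr (fun i => subst x (t i) (expand t m B))) add0n prednK;
    last exact: leq_trans (ltn0Sn _) hm.
  apply/le_anti/andP; split; last first.
    apply/joinsP => a; rewrite /pb; case: excluded_middle_informative => // hex _.
    have [i [hiN hi]] := hN a hex.
    rewrite -(hi m (ltnW hm)) -eval_subst.
    apply: (joins_sup_seq (fun i => ev (subst x (t i) (expand t m B)) v)) => //.
    by rewrite mem_index_iota (ltn_trans hiN hm).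
  apply/joinsP_seq => i _ _; rewrite eval_subst.
  exact: le_trans (mono HL t hB m _) (supS_ub _ (t i)).
Qed.

End Proofs.

Theorem mainTheorem15
  (Fsym : Type) (farity : Fsym -> nat) (Psym : Type) (parity : Psym -> nat)
  (C : finType) (oarity : C -> nat) (opol : forall c, 'I_(oarity c) -> bool)
  (d : Order.disp_t) (L : finTBLatticeType d) (imp : L -> L -> L)
  (ointerp : forall c, ('I_(oarity c) -> L) -> L)
  (HL : L_lattice_axioms opol imp ointerp)
  (hconst : exists f : Fsym, farity f = 0)
  (t : nat -> cterm farity) (ht : forall s : cterm farity, exists i, t i = s)
  (E : form farity parity oarity)
  (hsent : sentence E) (hweak : weak_only opol true E)
  (P : forall p, ('I_(parity p) -> cterm farity) -> L) :
  exists n, (0 < n)%N /\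
    forall m, (n <= m)%N -> forall v : nat -> cterm farity,
      eval imp ointerp P (expand t m E) v = eval imp ointerp P E v.
Proof.
have [n [hn H]] := main_lemma P HL ht hweak (fun _ => t 0%N).
exists n; split => // m hm v.
rewrite (@eval_ext _ _ _ _ _ _ _ _ imp ointerp P (expand t m E) v (fun _ => t 0%N)).
  rewrite H // (@eval_ext _ _ _ _ _ _ _ _ imp ointerp P E v (fun _ => t 0%N)) //.
  by move=> x /hsent.
by move=> x /free_expand /hsent.
Qed.
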